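(* Let $x\in\mathbb{R}\setminus D$ with binary expansion $x=k+\sum_{n\ge1}a_n2^{-n}$ ($k\in\mathbb{Z}$, $a_n\in\{0,1\}$). Suppose $\liminf_n G_n'(x)$ and $\limsup_n G_n'(x)$ are finite and $$\limsup_n G_n'(x)-\liminf_n G_n'(x)\in\{1,2\}.$$ Then there exists $m\ge1$ such that $a_{m+2i}+a_{m+2i+1}=1$ for all $i\ge0$, and $$d_-T(x)=\liminf_n G_n'(x)+1,\qquad D^+T(x)=\limsup_n G_n'(x)-1.$$
   Context: Let $\phi(x)=\operatorname{dist}(x,\mathbb{Z})$ and $T(x)=\sum_{n=0}^\infty 2^{-n}\phi(2^nx)$ (the Takagi function). For $n\ge1$ let $D_n=\{k/2^{n-1}:k\in\mathbb{Z}\}$, $D=\bigcup_nD_n$, $g_n(x)=\operatorname{dist}(x,D_n)$, $G_n=g_1+\dots+g_n$; for $x\notin D$, $G_n'(x)$ exists and is an integer. Dini derivatives: $d_-f(x)=\liminf_{h\uparrow0}\frac{f(x+h)-f(x)}{h}$, $D^+f(x)=\limsup_{h\downarrow0}\frac{f(x+h)-f(x)}{h}$. *)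

(* Defs.v *)
From Stdlib Require Import Reals Lra Lia ZArith.
Open Scope R_scope.

(* phi(x) = dist(x, Z): distance from x to the nearest integer.
   Int_part x is floor x, so the two nearest integers are floor x, floor x + 1. *)
Definition phi (x : R) : R :=
  Rmin (x - IZR (Int_part x)) (IZR (Int_part x) + 1 - x).

Definition takagi_term (x : R) (n : nat) : R := phi (2 ^ n * x) / 2 ^ n.

Definition in_D (n : nat) (x : R) : Prop := exists k : Z, x = IZR k / 2 ^ (n - 1).
Definition in_Dall (x : R) : Prop := exists n : nat, (1 <= n)%nat /\ in_D n x.

(* g_n(x) = dist(x, D_n) = 2^{-(n-1)} dist(2^{n-1} x, Z). *)
Definition g (n : nat) (x : R) : R := phi (2 ^ (n - 1) * x) / 2 ^ (n - 1).

Fixpoint G (n : nat) (x : R) : R :=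
  match n with
  | O => 0
  | S m => G m x + g (S m) x
  end.

Definition is_liminf_seq (u : nat -> R) (l : R) : Prop :=
  (forall eps, eps > 0 -> exists N, forall n, (N <= n)%nat -> u n > l - eps) /\
  (forall eps, eps > 0 -> forall N, exists n, (N <= n)%nat /\ u n < l + eps).

Definition is_limsup_seq (u : nat -> R) (L : R) : Prop :=
  (forall eps, eps > 0 -> exists N, forall n, (N <= n)%nat -> u n < L + eps) /\
  (forall eps, eps > 0 -> forall N, exists n, (N <= n)%nat /\ u n > L - eps).

Definition is_lower_left_dini (f : R -> R) (x l : R) : Prop :=
  (forall eps, eps > 0 -> exists delta, delta > 0 /\
      forall h, - delta < h < 0 -> (f (x + h) - f x) / h > l - eps) /\
  (forall eps, eps > 0 -> forall delta, delta > 0 ->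
      exists h, - delta < h < 0 /\ (f (x + h) - f x) / h < l + eps).

Definition is_upper_right_dini (f : R -> R) (x L : R) : Prop :=
  (forall eps, eps > 0 -> exists delta, delta > 0 /\
      forall h, 0 < h < delta -> (f (x + h) - f x) / h < L + eps) /\
  (forall eps, eps > 0 -> forall delta, delta > 0 ->
      exists h, 0 < h < delta /\ (f (x + h) - f x) / h > L - eps).

(* Main.v *)
Require Import Defs.
From Stdlib Require Import Reals Lra Lia ZArith.
Open Scope R_scope.

Lemma phi_le (z : R) (m : Z) : phi z <= Rabs (z - IZR m).
Proof.
  unfold phi. destruct (base_Int_part z) as [H1 H2].
  set (I := Int_part z) in *.
  destruct (Z_le_gt_dec m I) as [Hm|Hm].
  - apply IZR_le in Hm. apply Rle_trans with (z - IZR I); [apply Rmin_l|].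
    rewrite Rabs_right; lra.
  - assert (Hm' : (I + 1 <= m)%Z) by lia. apply IZR_le in Hm'. rewrite plus_IZR in Hm'.
    apply Rle_trans with (IZR I + 1 - z); [apply Rmin_r|].
    rewrite Rabs_left1; lra.
Qed.

Lemma phi_ex (z : R) : exists m : Z, phi z = Rabs (z - IZR m).
Proof.
  unfold phi. destruct (base_Int_part z) as [H1 H2].
  set (I := Int_part z) in *.
  destruct (Rle_dec (z - IZR I) (IZR I + 1 - z)) as [H|H].
  - exists I. rewrite Rmin_left by lra. rewrite Rabs_right; lra.
  - exists (I+1)%Z. rewrite Rmin_right by lra. rewrite plus_IZR. rewrite Rabs_left1; lra.
Qed.

Lemma phi_nonneg (z : R) : 0 <= phi z.
Proof. destruct (phi_ex z) as [m ->]. apply Rabs_pos. Qed.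

Lemma phi_per (z : R) (m : Z) : phi (z + IZR m) = phi z.
Proof.
  apply Rle_antisym.
  - destruct (phi_ex z) as [m0 H]. rewrite H.
    replace (z - IZR m0) with (z + IZR m - IZR (m0 + m)) by (rewrite plus_IZR; ring).
    apply phi_le.
  - destruct (phi_ex (z + IZR m)) as [m1 H]. rewrite H.
    replace (z + IZR m - IZR m1) with (z - IZR (m1 - m)) by (rewrite minus_IZR; ring).
    apply phi_le.
Qed.

Lemma phi_opp (z : R) : phi (- z) = phi z.
Proof.
  apply Rle_antisym.
  - destruct (phi_ex z) as [m0 H]. rewrite H.
    replace (Rabs (z - IZR m0)) with (Rabs (- z - IZR (- m0))).
    apply phi_le. rewrite opp_IZR, <- Rabs_Ropp. f_equal; ring.
  - destruct (phi_ex (-z)) as [m0 H]. rewrite H.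
    replace (Rabs (-z - IZR m0)) with (Rabs (z - IZR (- m0))).
    apply phi_le. rewrite opp_IZR, <- Rabs_Ropp. f_equal; ring.
Qed.

Lemma phi_01 (t : R) : 0 <= t <= 1 -> phi t = Rmin t (1 - t).
Proof.
  intros Ht. apply Rle_antisym.
  - apply Rmin_glb.
    + replace t with (Rabs (t - IZR 0)) at 2 by (rewrite Rabs_right; simpl; lra). apply phi_le.
    + replace (1 - t) with (Rabs (t - IZR 1)) by (rewrite Rabs_left1; simpl; lra). apply phi_le.
  - destruct (phi_ex t) as [m ->].
    destruct (Z_le_gt_dec m 0) as [Hm|Hm].
    + apply IZR_le in Hm. apply Rle_trans with t; [apply Rmin_l|]. rewrite Rabs_right; simpl in *; lra.
    + assert (Hm' : (1 <= m)%Z) by lia. apply IZR_le in Hm'.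
      apply Rle_trans with (1-t); [apply Rmin_r|]. rewrite Rabs_left1; lra.
Qed.

Lemma phi_lo (t : R) : 0 <= t <= 1/2 -> phi t = t.
Proof. intros. rewrite phi_01 by lra. apply Rmin_left; lra. Qed.

Lemma phi_hi (t : R) : 1/2 <= t <= 1 -> phi t = 1 - t.
Proof. intros. rewrite phi_01 by lra. apply Rmin_right; lra. Qed.

Lemma phi_two (y : R) : phi y + phi (2 * y) / 2 <= 1 / 2.
Proof.
  destruct (base_Int_part y) as [H1 H2]. set (I := Int_part y) in *.
  assert (HA := phi_le (2*y) (2*I+1)). rewrite plus_IZR, mult_IZR in HA. simpl in HA.
  destruct (Rle_dec (y - IZR I) (1/2)).
  - assert (HB := phi_le y I). rewrite Rabs_right in HB by lra.
    rewrite Rabs_left1 in HA by lra. lra.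
  - assert (HB := phi_le y (I+1)). rewrite plus_IZR in HB. rewrite Rabs_left1 in HB by (simpl; lra).
    rewrite Rabs_right in HA by lra. simpl in HB. lra.
Qed.

Lemma phi_half (z : R) : phi z <= 1/2.
Proof. assert (H := phi_two z). assert (H0 := phi_nonneg (2*z)). lra. Qed.

Lemma tt0 (y : R) : takagi_term y 0 = phi y.
Proof. unfold takagi_term. simpl. rewrite Rmult_1_l. unfold Rdiv. rewrite Rinv_1. ring. Qed.

Lemma ttS (y : R) (j : nat) : takagi_term y (S j) = takagi_term (2*y) j / 2.
Proof.
  unfold takagi_term. simpl. replace (2 * 2 ^ j * y) with (2 ^ j * (2 * y)) by ring.
  assert (0 < 2^j) by (apply pow_lt; lra). field. lra.
Qed.

Lemma psum_shift (y : R) (n : nat) :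
  sum_f_R0 (takagi_term y) (S n) = phi y + sum_f_R0 (takagi_term (2*y)) n / 2.
Proof.
  induction n.
  - simpl. rewrite tt0, ttS. ring.
  - replace (sum_f_R0 (takagi_term y) (S (S n))) with
      (sum_f_R0 (takagi_term y) (S n) + takagi_term y (S (S n))) by reflexivity.
    rewrite IHn, ttS.
    replace (sum_f_R0 (takagi_term (2*y)) (S n)) with
      (sum_f_R0 (takagi_term (2*y)) n + takagi_term (2*y) (S n)) by reflexivity. field.
Qed.

Lemma psum_bnd (n : nat) : forall y, 0 <= sum_f_R0 (takagi_term y) n <= 2/3.
Proof.
  assert (Hnn : forall n y, 0 <= sum_f_R0 (takagi_term y) n).
  { intros m y. induction m; simpl.
    - unfold takagi_term. apply Rmult_le_pos; [apply phi_nonneg|]. left; apply Rinv_0_lt_compat; apply pow_lt; lra.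
    - apply Rplus_le_le_0_compat; auto. unfold takagi_term.
      apply Rmult_le_pos; [apply phi_nonneg|]. left; apply Rinv_0_lt_compat; apply pow_lt; lra. }
  assert (H : forall n, (forall y, sum_f_R0 (takagi_term y) n <= 2/3) /\
                        (forall y, sum_f_R0 (takagi_term y) (S n) <= 2/3)).
  { induction n0.
    - split; intros y.
      + simpl. rewrite tt0. assert (H := phi_half y). lra.
      + rewrite psum_shift. simpl. rewrite tt0. assert (H := phi_two y). lra.
    - destruct IHn0 as [H1 H2]. split; [exact H2|]. intros y.
      rewrite psum_shift, psum_shift.
      assert (H3 := H1 (2*(2*y))). assert (H4 := phi_two y). lra. }
  intros y. split; [apply Hnn| apply (proj1 (H n))].
Qed.

Lemma isum_bnd (f : nat -> R) (s lo hi : R) (N : nat) :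
  infinite_sum f s -> (forall n, (N <= n)%nat -> lo <= sum_f_R0 f n <= hi) -> lo <= s <= hi.
Proof.
  intros Hs Hb. split.
  - destruct (Rle_dec lo s) as [|Hn]; [auto|]. exfalso.
    destruct (Hs (lo - s)) as [M HM]; [lra|].
    assert (H1 := HM (max M N) (Nat.le_max_l _ _)). assert (H2 := Hb (max M N) (Nat.le_max_r _ _)).
    unfold R_dist in H1. apply Rabs_def2 in H1. lra.
  - destruct (Rle_dec s hi) as [|Hn]; [auto|]. exfalso.
    destruct (Hs (s - hi)) as [M HM]; [lra|].
    assert (H1 := HM (max M N) (Nat.le_max_l _ _)). assert (H2 := Hb (max M N) (Nat.le_max_r _ _)).
    unfold R_dist in H1. apply Rabs_def2 in H1. lra.
Qed.

Lemma T_bnd (T : R -> R) (HT : forall y : R, infinite_sum (takagi_term y) (T y)) (y : R) :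
  0 <= T y <= 2/3.
Proof. apply (isum_bnd _ _ _ _ 0 (HT y)). intros n _. apply psum_bnd. Qed.

Lemma T_fun (T : R -> R) (HT : forall y : R, infinite_sum (takagi_term y) (T y)) (y : R) :
  T y = phi y + T (2*y) / 2.
Proof.
  apply (uniqueness_sum (takagi_term y)); [apply HT|].
  intros eps Heps. destruct (HT (2*y) (2*eps)) as [M HM]; [lra|].
  exists (S M). intros n Hn. destruct n as [|n]; [lia|].
  rewrite psum_shift. assert (H := HM n ltac:(lia)). unfold R_dist in *.
  replace (phi y + sum_f_R0 (takagi_term (2 * y)) n / 2 - (phi y + T (2 * y) / 2))
    with ((sum_f_R0 (takagi_term (2 * y)) n - T (2*y)) / 2) by field.
  unfold Rdiv. rewrite Rabs_mult, (Rabs_right (/2)) by (left; apply Rinv_0_lt_compat; lra).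
  apply Rmult_lt_reg_r with 2; [lra|]. rewrite Rmult_assoc, Rinv_l by lra. lra.
Qed.

Lemma T_ext (T : R -> R) (HT : forall y : R, infinite_sum (takagi_term y) (T y)) (y z : R) :
  (forall j, takagi_term y j = takagi_term z j) -> T y = T z.
Proof.
  intros H. apply (uniqueness_sum (takagi_term y)); [apply HT|].
  intros eps Heps. destruct (HT z eps Heps) as [M HM]. exists M. intros n Hn.
  replace (sum_f_R0 (takagi_term y) n) with (sum_f_R0 (takagi_term z) n). auto.
  apply sum_eq. intros; auto.
Qed.

Lemma T_per (T : R -> R) (HT : forall y : R, infinite_sum (takagi_term y) (T y)) (y : R) (m : Z) :
  T (y + IZR m) = T y.
Proof.
  apply T_ext; auto. intros j. unfold takagi_term. f_equal.
  replace (2 ^ j * (y + IZR m)) with (2^j * y + IZR (2 ^ Z.of_nat j * m)).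
  apply phi_per. rewrite mult_IZR, <- pow_IZR. simpl. ring.
Qed.

Lemma T_even (T : R -> R) (HT : forall y : R, infinite_sum (takagi_term y) (T y)) (y : R) :
  T (- y) = T y.
Proof.
  apply T_ext; auto. intros j. unfold takagi_term. f_equal.
  replace (2 ^ j * - y) with (- (2^j * y)) by ring. apply phi_opp.
Qed.

Lemma T_lo (T : R -> R) (HT : forall y : R, infinite_sum (takagi_term y) (T y)) (t : R) :
  0 <= t <= 1/2 -> T t = t + T (2*t) / 2.
Proof. intros. rewrite (T_fun T HT t), phi_lo; auto. Qed.

Lemma T_hi (T : R -> R) (HT : forall y : R, infinite_sum (takagi_term y) (T y)) (t : R) :
  1/2 <= t <= 1 -> T t = 1 - t + T (2*t - 1) / 2.
Proof.
  intros. rewrite (T_fun T HT t), phi_hi by auto.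
  rewrite <- (T_per T HT (2*t-1) 1). replace (2*t - 1 + IZR 1) with (2*t) by (simpl; ring). reflexivity.
Qed.

Lemma T_third (T : R -> R) (HT : forall y : R, infinite_sum (takagi_term y) (T y)) :
  T (1/3) = 2/3.
Proof.
  assert (H1 := T_lo T HT (1/3) ltac:(lra)). assert (H2 := T_hi T HT (2/3) ltac:(lra)).
  replace (2 * (1/3)) with (2/3) in H1 by field. replace (2 * (2/3) - 1) with (1/3) in H2 by field.
  lra.
Qed.

Lemma T_sum43 (T : R -> R) (HT : forall y : R, infinite_sum (takagi_term y) (T y)) (b : R) :
  0 <= b <= 1 -> T b + b <= 4/3.
Proof.
  intros Hb. destruct (Rle_dec b (1/2)).
  - assert (H := T_bnd T HT b). lra.
  - apply Rnot_le_lt in n. rewrite (T_hi T HT b) by lra. assert (H := T_bnd T HT (2*b-1)). lra.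
Qed.

Lemma INR_le_pow2 (j : nat) : INR j <= 2 ^ j.
Proof.
  induction j. simpl; lra. rewrite S_INR. simpl. assert (H := pow_R1_Rle 2 j ltac:(lra)). lra.
Qed.

Lemma pow2_unb (r : R) : exists j : nat, r < 2 ^ j.
Proof.
  destruct (archimed r) as [H1 H2]. exists (Z.to_nat (up r)).
  apply Rlt_le_trans with (INR (Z.to_nat (up r))); [|apply INR_le_pow2].
  destruct (Z_le_gt_dec 0 (up r)) as [Hz|Hz].
  - rewrite INR_IZR_INZ, Z2Nat.id by lia. lra.
  - apply Rlt_le_trans with (IZR (up r)); auto. assert (Hz2 : (up r < 0)%Z) by lia. apply IZR_lt in Hz2. simpl. apply Rle_trans with 0; [lra|apply pos_INR].
Qed.

Lemma pow2_unb_ge (r : R) (N : nat) : exists j : nat, (N <= j)%nat /\ forall i, (j <= i)%nat -> r < 2 ^ i.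
Proof.
  destruct (pow2_unb r) as [j Hj]. exists (max j N). split; [lia|]. intros i Hi.
  apply Rlt_le_trans with (2^j); auto. apply Rle_pow; [lra|lia].
Qed.

Lemma small_zero (e c : R) : (forall i : nat, Rabs e <= c / 4 ^ i) -> e = 0.
Proof.
  intros H. destruct (Req_dec e 0) as [|Hne]; auto. exfalso.
  assert (He : 0 < Rabs e) by (apply Rabs_pos_lt; auto).
  assert (Hc : 0 <= c) by (assert (H0 := H 0%nat); simpl in H0; lra).
  destruct (pow2_unb (c / Rabs e)) as [j Hj].
  assert (H4 : 2 ^ j <= 4 ^ j) by (apply pow_incr; lra).
  assert (Hp : 0 < 2 ^ j) by (apply pow_lt; lra).
  assert (H1 := H j). assert (H2 : c / 4 ^ j <= c / 2 ^ j).
  { unfold Rdiv. apply Rmult_le_compat_l; auto. apply Rinv_le_contravar; auto. }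
  assert (H3 : c / 2 ^ j < Rabs e).
  { apply (Rmult_lt_reg_r (2^j)); auto. unfold Rdiv. rewrite Rmult_assoc, Rinv_l by lra.
    apply (Rmult_lt_reg_r (/ Rabs e)). apply Rinv_0_lt_compat; auto.
    rewrite Rmult_1_r. replace (Rabs e * 2 ^ j * / Rabs e) with (2^j) by (field; lra). exact Hj. }
  lra.
Qed.

Lemma first_cross (f : nat -> R) (N k : nat) :
  0 <= f N -> f (N + k)%nat < 0 -> exists n, (N <= n)%nat /\ 0 <= f n /\ f (S n) < 0.
Proof.
  revert f N. induction k; intros f N H0 H1.
  - rewrite Nat.add_0_r in H1. lra.
  - destruct (Rle_dec 0 (f (S N))) as [H|H].
    + destruct (IHk f (S N) H) as [n [Hn1 Hn2]]. replace (S N + k)%nat with (N + S k)%nat by lia. auto.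
      exists n. split; [lia|auto].
    + exists N. split; [lia|]. split; auto. lra.
Qed.

Definition Xs (x : R) (p : nat -> Z) (n : nat) : R := 2 ^ n * x - IZR (p n).

Lemma Xs_rec (x : R) (p : nat -> Z) (a : nat -> nat)
  (Hp : forall n, p (S n) = (2 * p n + Z.of_nat (a (S n)))%Z) (n : nat) :
  Xs x p (S n) = 2 * Xs x p n - INR (a (S n)).
Proof. unfold Xs. rewrite Hp, plus_IZR, mult_IZR, <- INR_IZR_INZ. simpl. ring. Qed.

Lemma back01 (Y : nat -> R) (a : nat -> nat) (n : nat)
  (H01 : forall n, a (S n) = 0%nat \/ a (S n) = 1%nat)
  (HY : forall i, Y (S i) = 2 * Y i - INR (a (S i))) :
  0 <= Y n <= 1 -> forall i, (i <= n)%nat -> 0 <= Y i <= 1.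
Proof.
  intros Hn. assert (H : forall k, (k <= n)%nat -> 0 <= Y (n - k)%nat <= 1).
  { induction k; intros Hk.
    - rewrite Nat.sub_0_r; auto.
    - assert (E := HY (n - S k)%nat).
      assert (IH := IHk ltac:(lia)).
      destruct (H01 (n - S k)%nat) as [Ha|Ha]; rewrite Ha in E; simpl in E;
      replace (S (n - S k)) with (n - k)%nat in E by lia; lra. }
  intros i Hi. replace i with (n - (n - i))%nat by lia. apply H. lia.
Qed.

Lemma pairs (a : nat -> nat) (W : nat -> Z) (lz : Z) (N : nat)
  (H01 : forall n, a (S n) = 0%nat \/ a (S n) = 1%nat)
  (HW : forall n, W (S n) = (W n + 1 - 2 * Z.of_nat (a (S n)))%Z)
  (Hb : forall n, (N <= n)%nat -> (lz <= W n <= lz + 2)%Z)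
  (j : nat) : (N <= j)%nat -> W j = (lz + 1)%Z ->
  forall i, W (j + 2 * i)%nat = (lz + 1)%Z /\ (a (S (j + 2 * i)) + a (S (S (j + 2 * i))))%nat = 1%nat.
Proof.
  intros Hj HWj. induction i.
  - replace (j + 2 * 0)%nat with j by lia.
    assert (E1 := HW j). assert (E2 := HW (S j)). assert (B1 := Hb (S j) ltac:(lia)).
    assert (B2 := Hb (S (S j)) ltac:(lia)).
    destruct (H01 j) as [A1|A1]; destruct (H01 (S j)) as [A2|A2]; rewrite A1 in *; rewrite A2 in *;
      simpl in *; split; lia.
  - destruct IHi as [IH1 IH2]. replace (j + 2 * S i)%nat with (S (S (j + 2 * i))) by lia.
    remember (j + 2 * i)%nat as n eqn:Hn.
    assert (E1 := HW n). assert (E2 := HW (S n)). assert (E3 := HW (S (S n))). assert (E4 := HW (S (S (S n)))).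
    assert (B1 := Hb (S n) ltac:(lia)). assert (B2 := Hb (S (S n)) ltac:(lia)).
    assert (B3 := Hb (S (S (S n))) ltac:(lia)). assert (B4 := Hb (S (S (S (S n)))) ltac:(lia)).
    destruct (H01 n) as [A1|A1]; destruct (H01 (S n)) as [A2|A2];
    destruct (H01 (S (S n))) as [A3|A3]; destruct (H01 (S (S (S n)))) as [A4|A4];
    rewrite ?A1, ?A2, ?A3, ?A4 in *; simpl in *; split; lia.
Qed.

Lemma step4 (T : R -> R) (HT : forall y : R, infinite_sum (takagi_term y) (T y))
  (t X1 X2 a1 a2 : R) :
  0 < X1 < 1 -> 0 < X2 < 1 -> X1 = 2 * t - a1 -> X2 = 2 * X1 - a2 ->
  (a1 = 0 /\ a2 = 1) \/ (a1 = 1 /\ a2 = 0) -> T t = 1/2 + T X2 / 4.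
Proof.
  intros H1 H2 E1 E2 [[-> ->]|[-> ->]].
  - rewrite (T_lo T HT t) by lra. replace (2*t) with X1 by lra.
    rewrite (T_hi T HT X1) by lra. replace (2 * X1 - 1) with X2 by lra. lra.
  - rewrite (T_hi T HT t) by lra. replace (2*t - 1) with X1 by lra.
    rewrite (T_lo T HT X1) by lra. replace (2 * X1) with X2 by lra. lra.
Qed.

Lemma goodT (T : R -> R) (HT : forall y : R, infinite_sum (takagi_term y) (T y))
  (x : R) (a : nat -> nat) (p : nat -> Z)
  (H01 : forall n, a (S n) = 0%nat \/ a (S n) = 1%nat)
  (Hp : forall n, p (S n) = (2 * p n + Z.of_nat (a (S n)))%Z)
  (Hx : forall n, 0 < Xs x p n < 1) (j : nat) :
  (forall i, (a (S (j + 2 * i)) + a (S (S (j + 2 * i))))%nat = 1%nat) ->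
  T (Xs x p j) = 2/3.
Proof.
  intros Hpair.
  assert (Hs : forall i, T (Xs x p (j + 2 * i)) = 1/2 + T (Xs x p (j + 2 * S i)) / 4).
  { intros i. replace (j + 2 * S i)%nat with (S (S (j + 2 * i))) by lia.
    apply (step4 T HT _ (Xs x p (S (j + 2 * i))) _ (INR (a (S (j + 2 * i)))) (INR (a (S (S (j + 2 * i)))))).
    - apply Hx. - apply Hx. - apply Xs_rec; auto. - apply Xs_rec; auto.
    - assert (P := Hpair i). destruct (H01 (j + 2 * i)%nat) as [A|A]; rewrite A in *.
      + left. assert (a (S (S (j + 2 * i))) = 1%nat) as B by lia. rewrite B. simpl. lra.
      + right. assert (a (S (S (j + 2 * i))) = 0%nat) as B by lia. rewrite B. simpl. lra. }
  assert (Hi : forall i, T (Xs x p j) - 2/3 = (T (Xs x p (j + 2 * i)) - 2/3) / 4 ^ i).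
  { induction i.
    - replace (j + 2 * 0)%nat with j by lia. simpl. field.
    - rewrite IHi, (Hs i). simpl. field. apply pow_nonzero. lra. }
  assert (E : T (Xs x p j) - 2/3 = 0).
  { apply (small_zero _ (2/3)). intros i. rewrite (Hi i).
    assert (Hp4 : 0 < 4 ^ i) by (apply pow_lt; lra).
    unfold Rdiv. rewrite Rabs_mult, (Rabs_right (/ 4 ^ i)) by (left; apply Rinv_0_lt_compat; auto).
    apply Rmult_le_compat_r; [left; apply Rinv_0_lt_compat; auto|].
    assert (B := T_bnd T HT (Xs x p (j + 2 * i))). apply Rabs_le. lra. }
  lra.
Qed.

Lemma chain (T : R -> R) (HT : forall y : R, infinite_sum (takagi_term y) (T y))
  (x y : R) (a : nat -> nat) (p W : nat -> Z)
  (H01 : forall n, a (S n) = 0%nat \/ a (S n) = 1%nat)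
  (Hp : forall n, p (S n) = (2 * p n + Z.of_nat (a (S n)))%Z)
  (Hx : forall n, 0 < Xs x p n < 1)
  (HW0 : W 0%nat = 0%Z) (HW : forall n, W (S n) = (W n + 1 - 2 * Z.of_nat (a (S n)))%Z)
  (n : nat) : (forall i, (i <= n)%nat -> 0 <= Xs y p i <= 1) ->
  T x - T y = IZR (W n) * (x - y) + (T (Xs x p n) - T (Xs y p n)) / 2 ^ n.
Proof.
  induction n; intros HY.
  - rewrite HW0. unfold Xs. simpl.
    rewrite <- (T_per T HT (1 * x - IZR (p 0%nat)) (p 0%nat)).
    rewrite <- (T_per T HT (1 * y - IZR (p 0%nat)) (p 0%nat)).
    replace (1 * x - IZR (p 0%nat) + IZR (p 0%nat)) with x by ring.
    replace (1 * y - IZR (p 0%nat) + IZR (p 0%nat)) with y by ring. field.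
  - rewrite IHn by (intros; apply HY; lia).
    assert (Ex := Xs_rec x p a Hp n). assert (Ey := Xs_rec y p a Hp n).
    assert (Bx := Hx n). assert (Bx1 := Hx (S n)).
    assert (By := HY n ltac:(lia)). assert (By1 := HY (S n) ltac:(lia)).
    assert (D : Xs x p n - Xs y p n = 2 ^ n * (x - y)) by (unfold Xs; ring).
    assert (Hp2 : 0 < 2 ^ n) by (apply pow_lt; lra).
    rewrite HW, minus_IZR, plus_IZR, mult_IZR, <- INR_IZR_INZ.
    destruct (H01 n) as [A|A]; rewrite A in *; simpl INR in *.
    + rewrite (T_lo T HT (Xs x p n)) by lra. rewrite (T_lo T HT (Xs y p n)) by lra.
      replace (2 * Xs x p n) with (Xs x p (S n)) by lra.
      replace (2 * Xs y p n) with (Xs y p (S n)) by lra.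
      simpl pow. field_simplify; [|lra|lra].
      replace (Xs y p n) with (Xs x p n - 2 ^ n * (x - y)) by lra. field. lra.
    + rewrite (T_hi T HT (Xs x p n)) by lra. rewrite (T_hi T HT (Xs y p n)) by lra.
      replace (2 * Xs x p n - 1) with (Xs x p (S n)) by lra.
      replace (2 * Xs y p n - 1) with (Xs y p (S n)) by lra.
      simpl pow. field_simplify; [|lra|lra]. 
      replace (Xs y p n) with (Xs x p n - 2 ^ n * (x - y)) by lra. field. lra.
Qed.

Lemma core_left (T : R -> R) (HT : forall y : R, infinite_sum (takagi_term y) (T y))
  (x : R) (a : nat -> nat) (p W : nat -> Z) (lz : Z) (N : nat)
  (H01 : forall n, a (S n) = 0%nat \/ a (S n) = 1%nat)
  (Hp : forall n, p (S n) = (2 * p n + Z.of_nat (a (S n)))%Z)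
  (Hx : forall n, 0 < Xs x p n < 1)
  (HW0 : W 0%nat = 0%Z) (HW : forall n, W (S n) = (W n + 1 - 2 * Z.of_nat (a (S n)))%Z)
  (Hb : forall n, (N <= n)%nat -> (lz <= W n <= lz + 2)%Z)
  (Hio : forall M, exists n, (M <= n)%nat /\ W n = lz) :
  is_lower_left_dini T x (IZR lz + 1).
Proof.
  assert (G1 : forall j, (N <= j)%nat -> W j = (lz + 1)%Z -> T (Xs x p j) = 2/3).
  { intros j Hj HWj. apply (goodT T HT x a p H01 Hp Hx j). intros i.
    apply (proj2 (pairs a W lz N H01 HW Hb j Hj HWj i)). }
  assert (C1 : forall n, (N <= n)%nat -> W n = (lz + 1)%Z -> a (S n) = 1%nat -> T (Xs x p n) = 2/3).
  { intros n Hn HWn Ha.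
    assert (E1 := HW n). assert (E2 := HW (S n)). rewrite Ha in E1. simpl in E1.
    assert (B2 := Hb (S (S n)) ltac:(lia)).
    assert (Ha2 : a (S (S n)) = 0%nat) by (destruct (H01 (S n)) as [A|A]; rewrite A in E2; simpl in E2; lia).
    assert (G := G1 (S (S n)) ltac:(lia) ltac:(rewrite E2, Ha2; simpl; lia)).
    assert (X1 := Xs_rec x p a Hp n). assert (X2 := Xs_rec x p a Hp (S n)).
    rewrite Ha in X1. rewrite Ha2 in X2. simpl INR in *.
    assert (B1 := Hx (S n)). assert (B3 := Hx (S (S n))).
    rewrite (T_hi T HT (Xs x p n)) by lra. replace (2 * Xs x p n - 1) with (Xs x p (S n)) by lra.
    rewrite (T_lo T HT (Xs x p (S n))) by lra. replace (2 * Xs x p (S n)) with (Xs x p (S (S n))) by lra.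
    rewrite G. lra. }
  assert (C2 : forall n, (N <= n)%nat -> W n = (lz + 2)%Z -> a (S n) = 1%nat /\ T (Xs x p n) = 1 - Xs x p n + 1/3).
  { intros n Hn HWn.
    assert (E1 := HW n). assert (B1 := Hb (S n) ltac:(lia)).
    assert (Ha : a (S n) = 1%nat) by (destruct (H01 n) as [A|A]; rewrite A in E1; simpl in E1; lia).
    split; auto. rewrite Ha in E1. simpl in E1.
    assert (G := G1 (S n) ltac:(lia) ltac:(lia)).
    assert (X1 := Xs_rec x p a Hp n). rewrite Ha in X1. simpl INR in *.
    assert (B2 := Hx (S n)).
    rewrite (T_hi T HT (Xs x p n)) by lra. replace (2 * Xs x p n - 1) with (Xs x p (S n)) by lra.
    rewrite G. lra. }
  split.
  - intros eps Heps.
    set (delta := Xs x p N / 2 ^ N).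
    assert (HpN : 0 < 2 ^ N) by (apply pow_lt; lra).
    assert (HXN := Hx N).
    exists delta. split; [unfold delta; apply Rdiv_lt_0_compat; lra|].
    intros h [Hh1 Hh2]. set (y := x + h).
    assert (HYi : forall i, Xs y p i = Xs x p i + 2 ^ i * h) by (intros; unfold Xs, y; ring).
    assert (HYN : 0 <= Xs y p N).
    { rewrite HYi. unfold delta in Hh1.
      assert (2 ^ N * h > - Xs x p N).
      { apply (Rmult_lt_reg_r (/ 2 ^ N)). apply Rinv_0_lt_compat; auto.
        replace (2 ^ N * h * / 2 ^ N) with h by (field; lra).
        replace (- Xs x p N * / 2 ^ N) with (- (Xs x p N / 2 ^ N)) by (field; lra). lra. }
      lra. }
    destruct (pow2_unb_ge (/ (- h)) N) as [j [Hj1 Hj2]].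
    assert (HYj : Xs y p (N + (j - N))%nat < 0).
    { replace (N + (j - N))%nat with j by lia. rewrite HYi.
      assert (H1 := Hj2 j (le_n _)). assert (H2 := Hx j).
      assert (1 < 2 ^ j * (- h)).
      { apply (Rmult_lt_reg_r (/ (- h))). apply Rinv_0_lt_compat; lra.
        replace (2 ^ j * - h * / - h) with (2 ^ j) by (field; lra). lra. }
      lra. }
    destruct (first_cross (Xs y p) N (j - N) HYN HYj) as [n [Hn1 [Hn2 Hn3]]].
    assert (Hpn : 0 < 2 ^ n) by (apply pow_lt; lra).
    assert (HYrec : forall i, Xs y p (S i) = 2 * Xs y p i - INR (a (S i))) by (intros; apply Xs_rec; auto).
    assert (HYle : Xs y p n <= 1).
    { rewrite HYi. assert (H := Hx n). assert (2 ^ n * h < 0) by (apply Rmult_pos_neg; lra). lra. }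
    assert (HY01 := back01 (Xs y p) a n H01 HYrec (conj Hn2 HYle)).
    assert (Hch := chain T HT x y a p W H01 Hp Hx HW0 HW n HY01).
    assert (Ha : a (S n) = 1%nat).
    { rewrite HYrec in Hn3. destruct (H01 n) as [A|A]; auto. rewrite A in Hn3. simpl in Hn3. lra. }
    rewrite HYrec, Ha in Hn3. simpl INR in Hn3.
    assert (E1 := HW n). rewrite Ha in E1. simpl in E1.
    assert (B1 := Hb (S n) ltac:(lia)). assert (B0 := Hb n ltac:(lia)).
    assert (Xr := Xs_rec x p a Hp n). rewrite Ha in Xr. simpl INR in Xr.
    assert (Hxn := Hx n). assert (Hxn1 := Hx (S n)).
    set (Xn := Xs x p n) in *. set (Yn := Xs y p n) in *.
    assert (TY : T Yn = Yn + T (2 * Yn) / 2) by (apply (T_lo T HT); lra).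
    assert (T43 := T_sum43 T HT (2 * Yn) ltac:(lra)).
    assert (TB := T_bnd T HT (2 * Yn)).
    assert (Dxy : x - y = (Xn - Yn) / 2 ^ n) by (unfold Xn, Yn, Xs; field; lra).
    assert (Key : exists w, IZR (W n) = IZR lz + 1 + w /\ w * (Xn - Yn) + T Xn - T Yn >= 0).
    { destruct (Z.eq_dec (W n) (lz + 1)) as [Hw|Hw].
      - exists 0. split. rewrite Hw, plus_IZR. simpl; ring.
        assert (TX := C1 n ltac:(lia) Hw Ha). change (Xs x p n) with Xn in TX. rewrite TX. lra.
      - assert (Hw2 : W n = (lz + 2)%Z) by lia. exists 1. split. rewrite Hw2, plus_IZR. simpl; ring.
        destruct (C2 n ltac:(lia) Hw2) as [_ HT2]. change (Xs x p n) with Xn in HT2. rewrite HT2. lra. }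
    destruct Key as [w [Hw Hk]].
    assert (Hmain : T x - T y >= (IZR lz + 1) * (x - y)).
    { rewrite Hch, Hw, Dxy.
      assert (0 <= (w * (Xn - Yn) + T Xn - T Yn) / 2 ^ n) by (unfold Rdiv; apply Rmult_le_pos; [lra| left; apply Rinv_0_lt_compat; lra]).
      replace ((IZR lz + 1 + w) * ((Xn - Yn) / 2 ^ n) + (T Xn - T Yn) / 2 ^ n)
        with ((IZR lz + 1) * ((Xn - Yn) / 2 ^ n) + (w * (Xn - Yn) + T Xn - T Yn) / 2 ^ n) by (field; lra).
      lra. }
    fold y. replace (x - y) with (- h) in Hmain by (unfold y; ring).
    assert (Hq : (T y - T x) / h >= IZR lz + 1).
    { apply Rle_ge. apply (Rmult_le_reg_r (- h)); [lra|].
      replace ((T y - T x) / h * - h) with (T x - T y) by (field; lra). lra. }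
    lra.
  - intros eps Heps delta Hdelta.
    destruct (pow2_unb_ge (/ delta) N) as [M [HM1 HM2]].
    destruct (Hio (S M)) as [n1 [Hn1 HWn1]].
    destruct n1 as [|n]; [lia|].
    assert (E1 := HW n). assert (B0 := Hb n ltac:(lia)).
    assert (Ha : a (S n) = 1%nat) by (destruct (H01 n) as [A|A]; rewrite A in E1; simpl in E1; lia).
    rewrite Ha in E1. simpl in E1.
    assert (HWn : W n = (lz + 1)%Z) by lia.
    assert (TXn := C1 n ltac:(lia) HWn Ha).
    assert (Hpn : 0 < 2 ^ n) by (apply pow_lt; lra).
    assert (Xr := Xs_rec x p a Hp n). rewrite Ha in Xr. simpl INR in Xr.
    assert (Hxn := Hx n). assert (Hxn1 := Hx (S n)).
    set (h := (1/3 - Xs x p n) / 2 ^ n).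
    assert (Hdn : / delta < 2 ^ n) by (apply HM2; lia).
    exists h. split. split.
    + unfold h. apply (Rmult_lt_reg_r (2 ^ n)); auto.
      replace ((1 / 3 - Xs x p n) / 2 ^ n * 2 ^ n) with (1/3 - Xs x p n) by (field; lra).
      assert (1 < delta * 2 ^ n).
      { apply (Rmult_lt_reg_l (/ delta)). apply Rinv_0_lt_compat; auto.
        rewrite <- Rmult_assoc, Rinv_l by lra. lra. }
      lra.
    + unfold h. apply Rdiv_neg_pos; lra.
    + set (y := x + h).
      assert (HYn : Xs y p n = 1/3) by (unfold y, h, Xs; field; lra).
      assert (HYrec : forall i, Xs y p (S i) = 2 * Xs y p i - INR (a (S i))) by (intros; apply Xs_rec; auto).
      assert (HY01 := back01 (Xs y p) a n H01 HYrec ltac:(lra)).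
      assert (Hch := chain T HT x y a p W H01 Hp Hx HW0 HW n HY01).
      rewrite HYn, TXn, T_third, HWn, plus_IZR in Hch; auto.
      replace (x - y) with (- h) in Hch by (unfold y; ring).
      assert (Hh : h < 0) by (unfold h; apply Rdiv_neg_pos; lra).
      replace ((T y - T x) / h) with (IZR lz + 1).
      lra. apply (Rmult_eq_reg_r h); [|lra].
      replace ((T y - T x) / h * h) with (T y - T x) by (field; lra).
      simpl IZR in Hch. lra.
Qed.

Lemma loclin (f : R -> R) (x c : R) :
  (exists delta, 0 < delta /\ forall h, Rabs h < delta -> f (x + h) - f x = c * h) ->
  derivable_pt_lim f x c.
Proof.
  intros [delta [Hd H]] eps Heps. exists (mkposreal delta Hd). intros h Hh0 Hh. simpl in Hh.
  rewrite H by auto. replace (c * h / h - c) with 0 by (field; auto). rewrite Rabs_R0. auto.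
Qed.

Lemma dini_flip (T : R -> R) (Hev : forall y, T (- y) = T y) (x c : R) :
  is_lower_left_dini T (- x) c -> is_upper_right_dini T x (- c).
Proof.
  intros [H1 H2]. split.
  - intros eps Heps. destruct (H1 eps Heps) as [delta [Hd H]]. exists delta. split; auto.
    intros h Hh. assert (Q := H (- h) ltac:(lra)).
    replace (- x + - h) with (- (x + h)) in Q by ring. rewrite !Hev in Q.
    replace ((T (x + h) - T x) / - h) with (- ((T (x + h) - T x) / h)) in Q by (field; lra). lra.
  - intros eps Heps delta Hd. destruct (H2 eps Heps delta Hd) as [h [Hh Q]].
    exists (- h). split; [lra|].
    replace (- x + h) with (- (x + - h)) in Q by ring. rewrite !Hev in Q.
    replace ((T (x + - h) - T x) / h) with (- ((T (x + - h) - T x) / - h)) in Q by (field; lra). lra.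
Qed.

Lemma liminf_int (d : nat -> R) (W : nat -> Z) (l : R) :
  (forall n, (1 <= n)%nat -> d n = IZR (W n)) -> is_liminf_seq d l ->
  exists lz N, l = IZR lz /\ (forall n, (N <= n)%nat -> (lz <= W n)%Z) /\
    (forall M, exists n, (M <= n)%nat /\ W n = lz).
Proof.
  intros Hd [H1 H2].
  destruct (H1 (1/2) ltac:(lra)) as [N1 HN1].
  destruct (H2 (1/2) ltac:(lra) (max N1 1)) as [n0 [Hn0 Hn0']].
  set (lz := W n0).
  assert (Hl0 : IZR lz < l + 1/2 /\ IZR lz > l - 1/2).
  { unfold lz. rewrite <- Hd by lia. split; auto. apply HN1. lia. }
  assert (Hge : forall n, (max N1 1 <= n)%nat -> (lz <= W n)%Z).
  { intros n Hn. assert (A := HN1 n ltac:(lia)). rewrite Hd in A by lia.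
    assert (IZR (lz - 1) < IZR (W n)) by (rewrite minus_IZR; simpl; lra).
    apply lt_IZR in H. lia. }
  assert (Hio : forall M, exists n, (M <= n)%nat /\ W n = lz).
  { intros M. destruct (H2 (1/2) ltac:(lra) (max M (max N1 1))) as [n [Hn Hn']].
    exists n. split; [lia|]. rewrite Hd in Hn' by lia.
    assert (IZR (W n) < IZR (lz + 1)) by (rewrite plus_IZR; simpl; lra).
    apply lt_IZR in H. assert (B := Hge n ltac:(lia)). lia. }
  exists lz, (max N1 1). split; [|split; auto].
  apply Rle_antisym.
  - destruct (Rle_dec l (IZR lz)) as [|Hn]; auto. exfalso.
    destruct (H1 (l - IZR lz) ltac:(lra)) as [N2 HN2].
    destruct (Hio (max N2 1)) as [n [Hn1 Hn2]].
    assert (A := HN2 n ltac:(lia)). rewrite Hd, Hn2 in A by lia. lra.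
  - destruct (Rle_dec (IZR lz) l) as [|Hn]; auto. exfalso.
    destruct (H2 (IZR lz - l) ltac:(lra) (max (max N1 1) 1)) as [n [Hn1 Hn2]].
    rewrite Hd in Hn2 by lia. assert (B := Hge n ltac:(lia)). apply IZR_le in B. lra.
Qed.

Lemma limsup_int (d : nat -> R) (W : nat -> Z) (L : R) :
  (forall n, (1 <= n)%nat -> d n = IZR (W n)) -> is_limsup_seq d L ->
  exists Lz N, L = IZR Lz /\ (forall n, (N <= n)%nat -> (W n <= Lz)%Z) /\
    (forall M, exists n, (M <= n)%nat /\ W n = Lz).
Proof.
  intros Hd [H1 H2].
  destruct (liminf_int (fun n => - d n) (fun n => (- W n)%Z) (- L)) as [lz [N [E [Hb Hio]]]].
  - intros n Hn. rewrite opp_IZR, Hd; auto.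
  - split.
    + intros eps Heps. destruct (H1 eps Heps) as [N HN]. exists N. intros n Hn. assert (A := HN n Hn). lra.
    + intros eps Heps N. destruct (H2 eps Heps N) as [n [Hn A]]. exists n. split; auto. lra.
  - exists (- lz)%Z, N. split; [rewrite opp_IZR; lra|]. split.
    + intros n Hn. assert (A := Hb n Hn). lia.
    + intros M. destruct (Hio M) as [n [Hn A]]. exists n. split; auto. lia.
Qed.

Fixpoint pp (k : Z) (a : nat -> nat) (n : nat) : Z :=
  match n with O => k | S m => (2 * pp k a m + Z.of_nat (a (S m)))%Z end.

Fixpoint WW (a : nat -> nat) (n : nat) : Z :=
  match n with O => 0%Z | S m => (WW a m + 1 - 2 * Z.of_nat (a (S m)))%Z end.

Fixpoint PP (a : nat -> nat) (n : nat) : R :=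
  match n with O => 0 | S m => PP a m + INR (a (S m)) / 2 ^ (S m) end.

Lemma pp_PP (k : Z) (a : nat -> nat) (n : nat) : IZR (pp k a n) = 2 ^ n * (IZR k + PP a n).
Proof.
  induction n. simpl; ring.
  replace (pp k a (S n)) with (2 * pp k a n + Z.of_nat (a (S n)))%Z by reflexivity.
  replace (PP a (S n)) with (PP a n + INR (a (S n)) / 2 ^ (S n)) by reflexivity.
  rewrite plus_IZR, mult_IZR, IHn, <- INR_IZR_INZ. simpl pow.
  assert (0 < 2 ^ n) by (apply pow_lt; lra). field. lra.
Qed.

Lemma sum_PP (a : nat -> nat) (M : nat) :
  sum_f_R0 (fun n => INR (a (S n)) / 2 ^ (S n)) M = PP a (S M).
Proof.
  induction M. simpl; ring.
  replace (sum_f_R0 (fun n => INR (a (S n)) / 2 ^ (S n)) (S M)) with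
    (sum_f_R0 (fun n => INR (a (S n)) / 2 ^ (S n)) M + INR (a (S (S M))) / 2 ^ (S (S M))) by reflexivity.
  rewrite IHM. reflexivity.
Qed.

Lemma PP_bnd (a : nat -> nat) (H01 : forall n, a (S n) = 0%nat \/ a (S n) = 1%nat) (n k : nat) :
  PP a n <= PP a (n + k) <= PP a n + / 2 ^ n - / 2 ^ (n + k).
Proof.
  induction k.
  - rewrite Nat.add_0_r. lra.
  - replace (n + S k)%nat with (S (n + k)) by lia.
    change (PP a (S (n+k))) with (PP a (n+k) + INR (a (S (n + k))) / 2 ^ S (n + k)).
    assert (0 < 2 ^ (n + k)) by (apply pow_lt; lra).
    assert (Hab : 0 <= INR (a (S (n + k))) <= 1) by (destruct (H01 (n + k)%nat) as [A|A]; rewrite A; simpl; lra).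
    assert (E : INR (a (S (n + k))) / 2 ^ S (n + k) <= / 2 ^ (n + k) - / 2 ^ S (n + k)).
    { simpl. replace (/ 2 ^ (n + k) - / (2 * 2 ^ (n + k))) with (1 / (2 * 2 ^ (n + k))) by (field; lra).
      unfold Rdiv. apply Rmult_le_compat_r; [|lra]. left. apply Rinv_0_lt_compat. lra. }
    assert (E2 : 0 <= INR (a (S (n + k))) / 2 ^ S (n + k)).
    { unfold Rdiv. apply Rmult_le_pos; [lra|]. left; apply Rinv_0_lt_compat, pow_lt; lra. }
    lra.
Qed.

Lemma Xs_01 (x : R) (k : Z) (a : nat -> nat) (H01 : forall n, a (S n) = 0%nat \/ a (S n) = 1%nat)
  (Hexp : infinite_sum (fun n => INR (a (S n)) / 2 ^ (S n)) (x - IZR k)) (HxD : ~ in_Dall x) (n : nat) :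
  0 < Xs x (pp k a) n < 1.
Proof.
  assert (Hb : PP a n <= x - IZR k <= PP a n + / 2 ^ n).
  { apply (isum_bnd _ _ _ _ n Hexp). intros M HM. rewrite sum_PP.
    replace (S M) with (n + (S M - n))%nat by lia. assert (B := PP_bnd a H01 n (S M - n)).
    assert (0 < / 2 ^ (n + (S M - n))) by (apply Rinv_0_lt_compat, pow_lt; lra). lra. }
  assert (Hp : 0 < 2 ^ n) by (apply pow_lt; lra).
  assert (E : Xs x (pp k a) n = 2 ^ n * (x - IZR k - PP a n)) by (unfold Xs; rewrite pp_PP; ring).
  assert (E1 : 0 <= Xs x (pp k a) n <= 1).
  { rewrite E. split. apply Rmult_le_pos; lra.
    replace 1 with (2 ^ n * / 2 ^ n) by (field; lra). apply Rmult_le_compat_l; lra. }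
  split.
  - destruct (Req_dec (Xs x (pp k a) n) 0) as [Z|Z]; [|lra]. exfalso. apply HxD.
    exists (S n). split; [lia|]. exists (pp k a n). replace (S n - 1)%nat with n by lia.
    unfold Xs in Z. transitivity ((2^n * x)/2^n). field; lra. f_equal; lra.
  - destruct (Req_dec (Xs x (pp k a) n) 1) as [Z|Z]; [|lra]. exfalso. apply HxD.
    exists (S n). split; [lia|]. exists (pp k a n + 1)%Z. replace (S n - 1)%nat with n by lia.
    unfold Xs in Z. rewrite plus_IZR. transitivity ((2^n * x)/2^n). field; lra. f_equal; simpl; lra.
Qed.

Lemma g_deriv (x : R) (k : Z) (a : nat -> nat) (H01 : forall n, a (S n) = 0%nat \/ a (S n) = 1%nat)
  (Hx : forall n, 0 < Xs x (pp k a) n < 1) (i : nat) :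
  derivable_pt_lim (g (S i)) x (IZR (1 - 2 * Z.of_nat (a (S i)))).
Proof.
  apply loclin.
  assert (Xr := Xs_rec x (pp k a) a (fun n => eq_refl) i).
  assert (B0 := Hx i). assert (B1 := Hx (S i)).
  assert (Hp : 0 < 2 ^ i) by (apply pow_lt; lra).
  set (X := Xs x (pp k a) i) in *.
  assert (Hg : forall y, g (S i) y = phi (2 ^ i * y - IZR (pp k a i)) / 2 ^ i).
  { intros y. unfold g. replace (S i - 1)%nat with i by lia.
    rewrite <- (phi_per (2 ^ i * y - IZR (pp k a i)) (pp k a i)). f_equal. f_equal. ring. }
  destruct (H01 i) as [A|A]; rewrite A in *; simpl INR in Xr.
  - exists (Rmin X (1/2 - X) / 2 ^ i). split.
    { apply Rdiv_pos_pos; auto. apply Rmin_glb_lt; lra. }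
    intros h Hh. rewrite !Hg.
    assert (Hh2 : Rabs (2 ^ i * h) < Rmin X (1/2 - X)).
    { rewrite Rabs_mult, (Rabs_right (2^i)) by lra.
      apply (Rmult_lt_reg_r (/ 2 ^ i)). apply Rinv_0_lt_compat; auto.
      replace (2 ^ i * Rabs h * / 2 ^ i) with (Rabs h) by (field; lra). exact Hh. }
    assert (M1 := Rmin_l X (1/2 - X)). assert (M2 := Rmin_r X (1/2 - X)).
    apply Rabs_def2 in Hh2.
    replace (2 ^ i * (x + h) - IZR (pp k a i)) with (X + 2 ^ i * h) by (unfold X, Xs; ring).
    replace (2 ^ i * x - IZR (pp k a i)) with X by (unfold X, Xs; ring).
    rewrite !phi_lo by lra. simpl. field. lra.
  - exists (Rmin (X - 1/2) (1 - X) / 2 ^ i). split.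
    { apply Rdiv_pos_pos; auto. apply Rmin_glb_lt; lra. }
    intros h Hh. rewrite !Hg.
    assert (Hh2 : Rabs (2 ^ i * h) < Rmin (X - 1/2) (1 - X)).
    { rewrite Rabs_mult, (Rabs_right (2^i)) by lra.
      apply (Rmult_lt_reg_r (/ 2 ^ i)). apply Rinv_0_lt_compat; auto.
      replace (2 ^ i * Rabs h * / 2 ^ i) with (Rabs h) by (field; lra). exact Hh. }
    assert (M1 := Rmin_l (X - 1/2) (1 - X)). assert (M2 := Rmin_r (X - 1/2) (1 - X)).
    apply Rabs_def2 in Hh2.
    replace (2 ^ i * (x + h) - IZR (pp k a i)) with (X + 2 ^ i * h) by (unfold X, Xs; ring).
    replace (2 ^ i * x - IZR (pp k a i)) with X by (unfold X, Xs; ring).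
    rewrite !phi_hi by lra. simpl. field. lra.
Qed.

Lemma G_deriv (x : R) (k : Z) (a : nat -> nat) (H01 : forall n, a (S n) = 0%nat \/ a (S n) = 1%nat)
  (Hx : forall n, 0 < Xs x (pp k a) n < 1) (n : nat) :
  derivable_pt_lim (G n) x (IZR (WW a n)).
Proof.
  induction n.
  - apply loclin. exists 1. split; [lra|]. intros h _. simpl. ring.
  - change (derivable_pt_lim (G n + g (S n))%F x (IZR (WW a (S n)))).
    change (WW a (S n)) with (WW a n + 1 - 2 * Z.of_nat (a (S n)))%Z. replace (IZR (WW a n + 1 - 2 * Z.of_nat (a (S n))))
      with (IZR (WW a n) + IZR (1 - 2 * Z.of_nat (a (S n)))) by (rewrite <- plus_IZR; f_equal; lia).
    apply derivable_pt_lim_plus; auto. apply (g_deriv x k a H01 Hx).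
Qed.

Theorem proposition2p5
  (T : R -> R)
  (HT : forall y : R, infinite_sum (takagi_term y) (T y))
  (x : R) (HxD : ~ in_Dall x)
  (k : Z) (a : nat -> nat)
  (Ha01 : forall n, (1 <= n)%nat -> a n = 0%nat \/ a n = 1%nat)
  (Hexp : infinite_sum (fun n => INR (a (S n)) / 2 ^ (S n)) (x - IZR k))
  (d : nat -> R)
  (Hd : forall n, (1 <= n)%nat -> derivable_pt_lim (G n) x (d n))
  (l L : R)
  (Hl : is_liminf_seq d l) (HL : is_limsup_seq d L)
  (Hgap : L - l = 1 \/ L - l = 2) :
  (exists m : nat, (1 <= m)%nat /\
     forall i : nat, (a (m + 2 * i) + a (m + 2 * i + 1))%nat = 1%nat) /\
  is_lower_left_dini T x (l + 1) /\
  is_upper_right_dini T x (L - 1).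
Proof.
  assert (H01 : forall n, a (S n) = 0%nat \/ a (S n) = 1%nat) by (intros; apply Ha01; lia).
  set (p := pp k a). set (W := WW a).
  assert (Hp : forall n, p (S n) = (2 * p n + Z.of_nat (a (S n)))%Z) by reflexivity.
  assert (HW : forall n, W (S n) = (W n + 1 - 2 * Z.of_nat (a (S n)))%Z) by reflexivity.
  assert (HW0 : W 0%nat = 0%Z) by reflexivity.
  assert (Hx : forall n, 0 < Xs x p n < 1) by (intros; apply Xs_01; auto).
  assert (HdW : forall n, (1 <= n)%nat -> d n = IZR (W n)).
  { intros n Hn. apply (uniqueness_limite (G n) x); auto. apply (G_deriv x k a H01 Hx). }
  destruct (liminf_int d W l HdW Hl) as [lz [N1 [El [Hb1 Hio1]]]].
  destruct (limsup_int d W L HdW HL) as [Lz [N2 [EL [Hb2 Hio2]]]].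
  assert (Hg : (Lz - lz = 1)%Z \/ (Lz - lz = 2)%Z).
  { rewrite El, EL in Hgap. destruct Hgap as [E|E]; [left|right]; apply eq_IZR; rewrite minus_IZR; simpl; lra. }
  set (N := max N1 N2).
  assert (Hb : forall n, (N <= n)%nat -> (lz <= W n <= lz + 2)%Z).
  { intros n Hn. assert (A := Hb1 n ltac:(lia)). assert (B := Hb2 n ltac:(lia)). lia. }
  split; [|split].
  - destruct (Hio1 (S N)) as [j1 [Hj1 Hj1']]. destruct j1 as [|j]; [lia|].
    assert (E1 := HW j). assert (B0 := Hb j ltac:(lia)).
    assert (HWj : W j = (lz + 1)%Z) by (destruct (H01 j) as [A|A]; rewrite A in E1; simpl in E1; lia).
    exists (S j). split; [lia|]. intros i.
    destruct (pairs a W lz N H01 HW Hb j ltac:(lia) HWj i) as [_ P].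
    replace (S j + 2 * i)%nat with (S (j + 2 * i)) by lia.
    replace (S (j + 2 * i) + 1)%nat with (S (S (j + 2 * i))) by lia. exact P.
  - rewrite El. apply (core_left T HT x a p W lz N H01 Hp Hx HW0 HW Hb Hio1).
  - set (a' := fun n => (1 - a n)%nat).
    set (p' := fun n => (- p n - 1)%Z).
    set (W' := fun n => (- W n)%Z).
    assert (H01' : forall n, a' (S n) = 0%nat \/ a' (S n) = 1%nat).
    { intros n. unfold a'. destruct (H01 n) as [A|A]; rewrite A; auto. }
    assert (Hp' : forall n, p' (S n) = (2 * p' n + Z.of_nat (a' (S n)))%Z).
    { intros n. unfold p', a'. cbv beta. rewrite Hp. destruct (H01 n) as [A|A]; rewrite A; lia. }
    assert (Hx' : forall n, 0 < Xs (- x) p' n < 1).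
    { intros n. assert (E : Xs (- x) p' n = 1 - Xs x p n).
      { unfold Xs, p'. rewrite minus_IZR, opp_IZR. simpl. ring. }
      rewrite E. assert (B := Hx n). lra. }
    assert (HW0' : W' 0%nat = 0%Z) by (unfold W'; rewrite HW0; reflexivity).
    assert (HW' : forall n, W' (S n) = (W' n + 1 - 2 * Z.of_nat (a' (S n)))%Z).
    { intros n. unfold W', a'. cbv beta. rewrite HW. destruct (H01 n) as [A|A]; rewrite A; lia. }
    assert (Hb' : forall n, (N <= n)%nat -> (- Lz <= W' n <= - Lz + 2)%Z).
    { intros n Hn. unfold W'. assert (A := Hb1 n ltac:(lia)). assert (B := Hb2 n ltac:(lia)). lia. }
    assert (Hio' : forall M, exists n, (M <= n)%nat /\ W' n = (- Lz)%Z).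
    { intros M. destruct (Hio2 M) as [n [Hn E]]. exists n. split; auto. unfold W'. lia. }
    assert (Hc := core_left T HT (- x) a' p' W' (- Lz) N H01' Hp' Hx' HW0' HW' Hb' Hio').
    apply dini_flip in Hc; [|apply (T_even T HT)].
    replace (L - 1) with (- (IZR (- Lz) + 1)) by (rewrite opp_IZR, EL; ring). exact Hc.
Qed.
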